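(* Let $k\ge 2$ and let $K_{n_1,\ldots,n_k}$ be the complete $k$-partite graph with parts $V_1,\ldots,V_k$ and vertex set $V=V_1\cup\cdots\cup V_k$, where $n_i=|V_i|\ge 2$ for all $1\le i\le k$. Then the diameter of the 1-skeleton of $\mathrm{CUT}(K_{n_1,\ldots,n_k})$ equals $2$.
   Context: For an undirected graph $G=(V,E)$ and $S\subseteq V$, $\delta(S)\subseteq E$ denotes the set of edges with exactly one endpoint in $S$, and $\mathbf v(S)\in\{0,1\}^{E}$ is its incidence vector ($v(S)_e=1$ iff $e\in\delta(S)$). The cut polytope is $\mathrm{CUT}(G)=\operatorname{conv}\{\mathbf v(S):S\subseteq V\}\subset\mathbb R^{E}$. The 1-skeleton of a polytope is the graph whose vertices are the polytope's vertices and whose edges are its one-dimensional faces; the diameter is the maximum shortest-path edge distance between two vertices of this graph. *)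

(* Defs.v *)
From HB Require Import structures.
From mathcomp Require Import all_boot all_order all_algebra.
From mathcomp Require Import reals.
Set Implicit Arguments. Unset Strict Implicit. Unset Printing Implicit Defensive.
Import Order.TTheory GRing.Theory Num.Theory.
Local Open Scope ring_scope.

Section Cut.
Variable V : finType.
(* a simple graph on V, given by its adjacency relation (only pairs u != v
   with adj u v count as edges) *)
Variable adj : rel V.

Definition is_edge (e : {set V}) : bool :=
  [exists u, exists v, [&& u != v, adj u v & e == [set u; v]]].

Definition edge := {e : {set V} | is_edge e}.

Variable R : realType.

Definition cutvec (S : {set V}) : edge -> R :=
  fun e => if #|val e :&: S| == 1%N then 1 else 0.
End Cut.

Section Polytope.
Variables (E : finType) (R : realType).

Definition dotp (c x : E -> R) : R := \sum_e c e * x e.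

Definition conv (I : finType) (f : I -> E -> R) (x : E -> R) : Prop :=
  exists w : I -> R, (forall i, 0 <= w i) /\ \sum_i w i = 1 /\
    forall e, x e = \sum_i w i * f i e.

Definition is_face (P F : (E -> R) -> Prop) : Prop :=
  exists (c : E -> R) (d : R), (forall x, P x -> dotp c x <= d) /\
    forall x, F x <-> (P x /\ dotp c x = d).

Definition is_vertex (P : (E -> R) -> Prop) (p : E -> R) : Prop :=
  is_face P (fun x => x = p).

Definition segment (u v : E -> R) (x : E -> R) : Prop :=
  exists t : R, 0 <= t <= 1 /\ forall e, x e = (1 - t) * u e + t * v e.

Definition skel_adj (P : (E -> R) -> Prop) (u v : E -> R) : Prop :=
  is_vertex P u /\ is_vertex P v /\ u <> v /\ is_face P (segment u v).

Fixpoint skel_within (P : (E -> R) -> Prop) (m : nat) (u v : E -> R) : Prop :=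
  match m with
  | 0 => u = v
  | m'.+1 => skel_within P m' u v \/
             exists w, skel_within P m' u w /\ skel_adj P w v
  end.

Definition skeleton_diameter (P : (E -> R) -> Prop) (d : nat) : Prop :=
  (forall u v, is_vertex P u -> is_vertex P v -> skel_within P d u v) /\
  (exists u v, is_vertex P u /\ is_vertex P v /\
     forall m, (m < d)%N -> ~ skel_within P m u v).
End Polytope.

Definition CUT (V : finType) (adj : rel V) (R : realType) :
  (edge adj -> R) -> Prop :=
  conv (fun S : {set V} => @cutvec V adj R S).

(* complete k-partite graph K_{n_1,...,n_k}: vertex (i, a) lies in part V_i *)
Definition mpvert (k : nat) (n : 'I_k -> nat) : finType := {i : 'I_k & 'I_(n i)}.

Definition multipartite (k : nat) (n : 'I_k -> nat) : rel (mpvert n) :=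
  fun u v => tag u != tag v.

Arguments CUT {V} adj R.
Arguments multipartite : clear implicits.

(* Main.v *)
Require Import Defs.
From HB Require Import structures.
From mathcomp Require Import all_boot all_order all_algebra.
From mathcomp Require Import reals.
From mathcomp Require Import lra.
From Stdlib Require Import FunctionalExtensionality Classical.
Set Implicit Arguments. Unset Strict Implicit. Unset Printing Implicit Defensive.
Import Order.TTheory GRing.Theory Num.Theory.
Local Open Scope ring_scope.

Section Gen.
Variables (E I : finType) (R : realType) (f : I -> E -> R).

Lemma sum_delta (F : I -> R) i0 : \sum_i (i == i0)%:R * F i = F i0.
Proof.
rewrite (bigD1 i0) //= eqxx mul1r big1 ?addr0 // => i /negbTE ->.
by rewrite mul0r.
Qed.

Lemma sum_delta1 (i0 : I) : \sum_i ((i == i0)%:R : R) = 1.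
Proof.
rewrite -[RHS](sum_delta (fun _ => 1) i0); apply: eq_bigr => i _; by rewrite mulr1.
Qed.

Lemma dotp_conv c x w : (forall e, x e = \sum_i w i * f i e) ->
  dotp c x = \sum_i w i * dotp c (f i).
Proof.
move=> hx; rewrite /dotp.
under eq_bigr do rewrite hx mulr_sumr.
rewrite exchange_big; apply: eq_bigr => i _.
rewrite mulr_sumr; apply: eq_bigr => e _; by rewrite mulrCA.
Qed.

Lemma conv_delta i0 : conv f (f i0).
Proof.
exists (fun i => (i == i0)%:R); split; first by move=> i; rewrite ler0n.
split; first exact: sum_delta1.
move=> e; by rewrite sum_delta.
Qed.

Lemma conv_le c d : (forall i, dotp c (f i) <= d) ->
  forall x, conv f x -> dotp c x <= d.
Proof.
move=> hb x [w [w0 [w1 wx]]].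
rewrite (dotp_conv c wx).
apply: le_trans (_ : \sum_i w i * d <= d).
  by apply: ler_sum => i _; apply: ler_wpM2l.
by rewrite -mulr_suml w1 mul1r.
Qed.

Lemma conv_tight c d : (forall i, dotp c (f i) <= d) ->
  forall x, conv f x -> dotp c x = d ->
  exists w : I -> R, (forall i, 0 <= w i) /\ \sum_i w i = 1 /\
    (forall e, x e = \sum_i w i * f i e) /\
    (forall i, w i != 0 -> dotp c (f i) = d).
Proof.
move=> hb x [w [w0 [w1 wx]]] hx.
exists w; do 3 (split => //).
have hs : \sum_i w i * (d - dotp c (f i)) = 0.
  under eq_bigr do rewrite mulrBr.
  by rewrite sumrB -mulr_suml w1 mul1r -(dotp_conv c wx) hx subrr.
move=> i wi.
have := psumr_eq0P (P := xpredT) _ hs (i := i) isT.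
move=> /(_ _)/eqP; rewrite mulf_eq0 (negbTE wi) /= subr_eq0 => h.
  by apply/esym/eqP/h => j _; apply: mulr_ge0 => //; rewrite subr_ge0.
Qed.

Lemma vertex_gen c d p i0 : (forall i, dotp c (f i) <= d) ->
  (forall i, dotp c (f i) = d -> f i = p) -> dotp c (f i0) = d ->
  is_vertex (conv f) p.
Proof.
move=> hb hp h0; exists c, d; split; first exact: conv_le.
move=> x; split.
  move=> ->; rewrite -(hp _ h0); split => //; exact: conv_delta.
case=> Px Hx; have [w [w0 [w1 [wx wt]]]] := conv_tight hb Px Hx.
apply: functional_extensionality => e; rewrite wx.
transitivity (\sum_i w i * p e).
  apply: eq_bigr => i _; have [->|/wt/hp ->] := eqVneq (w i) 0; last by [].
  by rewrite !mul0r.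
by rewrite -mulr_suml w1 mul1r.
Qed.

Lemma seg_gen c d u v i0 i1 : (forall i, dotp c (f i) <= d) ->
  (forall i, dotp c (f i) = d -> f i = u \/ f i = v) -> f i0 = u -> f i1 = v ->
  dotp c u = d -> dotp c v = d -> is_face (conv f) (segment u v).
Proof.
move=> hb huv hu hv cu cv; exists c, d; split; first exact: conv_le.
move=> x; split.
  case=> t [/andP[t0 t1] hx].
  pose w := fun i => (1 - t) * (i == i0)%:R + t * (i == i1)%:R.
  have wx : forall e, x e = \sum_i w i * f i e.
    move=> e; rewrite hx /w.
    under eq_bigr do rewrite mulrDl -!mulrA.
    by rewrite big_split -!mulr_sumr !sum_delta hu hv.
  split.
    exists w; split.
      move=> i; apply: addr_ge0; apply: mulr_ge0 => //; rewrite ?subr_ge0 ?ler0n //.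
    split => //.
    rewrite big_split -!mulr_sumr !sum_delta1 !mulr1; change (1 - t + t = 1); lra.
  rewrite (dotp_conv c wx) /w.
  under eq_bigr do rewrite mulrDl -!mulrA.
  rewrite big_split -!mulr_sumr !sum_delta hu hv cu cv; change ((1 - t) * d + t * d = d); lra.
case=> Px Hx; have [w [w0 [w1 [wx wt]]]] := conv_tight hb Px Hx.
pose Q := fun i => [forall e, f i e == v e].
exists (\sum_(i | Q i) w i).
have hsplit : 1 = \sum_(i | Q i) w i + \sum_(i | ~~ Q i) w i by rewrite -w1 (bigID Q).
have hQ : 0 <= \sum_(i | ~~ Q i) w i by apply: sumr_ge0.
have hQ' : 0 <= \sum_(i | Q i) w i by apply: sumr_ge0.
split; first by apply/andP; split; lra.
move=> e; rewrite wx (bigID Q) /=.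
have -> : \sum_(i | Q i) w i * f i e = (\sum_(i | Q i) w i) * v e.
  rewrite mulr_suml; apply: eq_bigr => i /forallP /(_ e) /eqP -> //.
have -> : \sum_(i | ~~ Q i) w i * f i e = (\sum_(i | ~~ Q i) w i) * u e.
  rewrite mulr_suml; apply: eq_bigr => i hi.
  have [->|/wt/huv []] := eqVneq (w i) 0; first by rewrite !mul0r.
    by move=> ->.
  move=> fv; case/negP: hi; apply/forallP => e'; by rewrite fv.
have -> : 1 - \sum_(i | Q i) w i = \sum_(i | ~~ Q i) w i by lra.
by rewrite addrC.
Qed.

End Gen.

Lemma card2I (T : finType) (p q : T) (S : {set T}) : p != q ->
  (#|[set p; q] :&: S| == 1%N) = ((p \in S) != (q \in S)).
Proof.
move=> hpq.
have -> : [set p; q] :&: S = (if p \in S then [set p] else set0) :|: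
                             (if q \in S then [set q] else set0).
  apply/setP => x; case hp: (p \in S); case hq: (q \in S); rewrite !inE;
  (case: (eqVneq x p) => [->|hxp]; last case: (eqVneq x q) => [->|hxq]);
  rewrite /= ?hp ?hq ?(negbTE hpq) ?eqxx ?andbF ?orbT ?orbF ?inE ?eqxx //;
  rewrite ?(negbTE hxp) ?(negbTE hxq) ?eqxx ?hp ?hq ?orbT ?orbF //= ?(negbTE hpq) //
     eq_sym (negbTE hpq).
case: (p \in S) (q \in S) => [] [] /=; rewrite ?setU0 ?set0U ?cards1 ?cards0 //.
by rewrite cards2 hpq.
Qed.

Section Graph.
Variables (k : nat) (n : 'I_k -> nat) (R : realType).
Local Notation V := (mpvert n).
Local Notation adj := (multipartite k n).
Local Notation E := (edge adj).
Local Notation cv S := (@cutvec V adj R S).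

Lemma edge_ends (e : E) : exists p q : V,
  [/\ p != q, tag p != tag q & val e = [set p; q]].
Proof.
have := valP e; move/existsP=> [p /existsP [q /and3P [h1 h2 /eqP h3]]].
by exists p, q.
Qed.

Lemma cutvecE (S : {set V}) (e : E) (p q : V) : p != q -> val e = [set p; q] ->
  cv S e = if (p \in S) != (q \in S) then 1 else 0.
Proof. by move=> hpq he; rewrite /cutvec he card2I. Qed.

Lemma mk_is_edge (p q : V) : tag p != tag q -> is_edge adj [set p; q].
Proof.
move=> h; apply/existsP; exists p; apply/existsP; exists q.
rewrite /multipartite h eqxx andbT /= andbT.
by apply: contraNneq h => ->.
Qed.

Definition mkedge (p q : V) (h : tag p != tag q) : E :=
  exist _ [set p; q] (mk_is_edge h).

Lemma tag_neq (p q : V) : tag p != tag q -> p != q.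
Proof. by apply: contraNneq => ->. Qed.

Lemma cutvec_mk S (p q : V) (h : tag p != tag q) :
  cv S (mkedge h) = if (p \in S) != (q \in S) then 1 else 0.
Proof. by apply: cutvecE => //; apply: tag_neq. Qed.

Lemma cutvec01 (S : {set V}) (e : E) : cv S e = 0 \/ cv S e = 1.
Proof. by rewrite /cutvec; case: ifP; [right|left]. Qed.

Lemma if10_inj (b b' : bool) : ((if b then 1 else 0 : R) = if b' then 1 else 0) -> b = b'.
Proof.
case: b; case: b' => // h; move: h; first by move/eqP; rewrite oner_eq0.
by move/eqP; rewrite eq_sym oner_eq0.
Qed.

Lemma sum_le_eq (a b : E -> R) : (forall e, a e <= b e) ->
  \sum_e a e = \sum_e b e -> forall e, a e = b e.
Proof.
move=> hab hs e.
have h0 : \sum_e (b e - a e) = 0 by rewrite sumrB hs subrr.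
have hp : forall i, xpredT i -> 0 <= b i - a i by move=> i _; rewrite subr_ge0.
have := psumr_eq0P hp h0 (i := e) isT.
by move=> /eqP; rewrite subr_eq0 => /eqP ->.
Qed.

Lemma cut_vertex S : is_vertex (CUT adj R) (cv S).
Proof.
pose c := fun e => 2 * cv S e - 1.
have tb : forall X e, c e * cv X e <= cv S e.
  by move=> X e; rewrite /c; case: (cutvec01 S e) => ->; case: (cutvec01 X e) => ->; lra.
apply: (@vertex_gen _ _ _ _ c (\sum_e cv S e) _ S).
- by move=> X; apply: ler_sum => e _; apply: tb.
- move=> X /(sum_le_eq (tb X)) h; apply: functional_extensionality => e.
  move: (h e); rewrite /c.
  by case: (cutvec01 S e) => ->; case: (cutvec01 X e) => ->; lra.
- rewrite /dotp; apply: eq_bigr => e _; rewrite /c.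
  by case: (cutvec01 S e) => ->; lra.
Qed.


Definition sd (X Y : {set V}) := (X :\: Y) :|: (Y :\: X).

Lemma in_sd r X Y : (r \in sd X Y) = ((r \in X) != (r \in Y)).
Proof. by rewrite /sd !inE; case: (r \in X); case: (r \in Y). Qed.

Definition meets2 (X : {set V}) := exists p q, p \in X /\ q \in X /\ tag p != tag q.
Definition good (X : {set V}) := meets2 X \/ (#|X| <= 1)%N.

Lemma rigid X (Y : {set V}) : good X ->
  (forall p q, p \in X -> q \in X -> tag p != tag q -> (p \in Y) = (q \in Y)) ->
  forall p q, p \in X -> q \in X -> (p \in Y) = (q \in Y).
Proof.
move=> [[p0 [q0 [hp0 [hq0 ht]]]] | hc] H.
  have key : forall r, r \in X -> (r \in Y) = (p0 \in Y).
    move=> r hr; have [htr|htr] := eqVneq (tag r) (tag p0).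
      rewrite (H r q0 hr hq0); first by rewrite (H p0 q0).
      by rewrite htr.
    exact: H.
  by move=> p q hp hq; rewrite !key.
by move=> p q hp hq; rewrite ((card_le1_eqP hc) p q hp hq).
Qed.

Lemma z1 : (0 == 1 :> R) = false.
Proof. by rewrite eq_sym oner_eq0. Qed.

Lemma cv_sd S T (e : E) : cv T e = if cv (sd S T) e == 1 then 1 - cv S e else cv S e.
Proof.
have [p [q [hpq _ he]]] := edge_ends e.
rewrite !(cutvecE _ hpq he) !in_sd.
case: (p \in S); case: (q \in S); case: (p \in T); case: (q \in T);
  rewrite /= ?eqxx ?z1 //; lra.
Qed.

Lemma adj_step S T : good (sd S T) -> good (~: sd S T) ->
  skel_within (CUT adj R) 1 (cv S) (cv T).
Proof.
move=> gU gU'.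
set U := sd S T in gU gU'.
case: (boolP [forall e, cv S e == cv T e]) => [/forallP he | hne].
  left; apply: functional_extensionality => e; exact/eqP.
right; exists (cv S); split; first by [].
split; first exact: cut_vertex. split; first exact: cut_vertex.
split.
  move=> hST; case/forallP: hne => e; by rewrite hST.
pose c := fun e => if cv U e == 1 then 0 else 2 * cv S e - 1.
pose dt := fun e => if cv U e == 1 then 0 else cv S e.
have tb : forall X e, c e * cv X e <= dt e.
  move=> X e; rewrite /c /dt.
  by case: (cutvec01 U e) => ->; case: (cutvec01 S e) => ->;
    case: (cutvec01 X e) => ->; rewrite ?eqxx ?z1; lra.
have tight : forall X e, c e * cv X e = dt e -> cv U e != 1 -> cv X e = cv S e.
  move=> X e; rewrite /c /dt.
  by case: (cutvec01 U e) => ->; case: (cutvec01 S e) => ->;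
    case: (cutvec01 X e) => ->; rewrite ?eqxx ?z1 //; lra.
apply: (@seg_gen _ _ _ _ c (\sum_e dt e) _ _ S T).
- by move=> X; apply: ler_sum => e _; apply: tb.
- move=> X /(sum_le_eq (tb X)) h.
  pose Y := sd X S.
  have H : forall p q, tag p != tag q -> (p \in U) = (q \in U) -> (p \in Y) = (q \in Y).
    move=> p q hpq hU; have := tight X (mkedge hpq) (h _).
    rewrite !cutvec_mk hU eqxx z1 => /(_ isT) /if10_inj.
    rewrite !in_sd.
    by case: (p \in X); case: (q \in X); case: (p \in S); case: (q \in S).
  have HU := rigid gU (Y := Y).
  have HU' := rigid gU' (Y := Y).
  have {HU} HU : forall p q, p \in U -> q \in U -> (p \in Y) = (q \in Y).
    apply: HU => p q hp hq ht; apply: H ht _; by rewrite hp hq.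
  have {HU'} HU' : forall p q, p \in ~: U -> q \in ~: U -> (p \in Y) = (q \in Y).
    apply: HU' => p q hp hq ht; apply: H ht _.
    by rewrite !in_setC in hp hq; rewrite (negbTE hp) (negbTE hq).
  have same : forall p q, (p \in U) = (q \in U) -> (p \in Y) = (q \in Y).
    move=> p q; case hp: (p \in U); case hq: (q \in U) => // _.
      exact: HU.
    by apply: HU'; rewrite inE ?hp ?hq.
  case: (boolP [forall p, forall q, (p \in Y) == (q \in Y)]) => [/forallP hall | hnall].
    left; apply: functional_extensionality => e.
    have [p [q [hpq _ he]]] := edge_ends e.
    rewrite !(cutvecE _ hpq he).
    have := eqP (forallP (hall p) q); rewrite !in_sd.
    by case: (p \in X); case: (q \in X); case: (p \in S); case: (q \in S).
  right; move/forallPn: hnall => [r /forallPn [r' hr]].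
  have hrr : (r \in U) != (r' \in U).
    by apply: contra hr => /eqP /same ->.
  have key : forall p, (p \in Y) = ((r \in Y) != ((p \in U) != (r \in U))).
    move=> p; have [hpr|hpr] := eqVneq (p \in U) (r \in U).
      by rewrite (same _ _ hpr); case: (r \in Y).
    have hpr' : (p \in U) = (r' \in U).
      by move: hpr hrr; case: (p \in U); case: (r \in U); case: (r' \in U).
    rewrite (same _ _ hpr').
    by move: hr; case: (r \in Y); case: (r' \in Y).
  apply: functional_extensionality => e.
  have [p [q [hpq _ he]]] := edge_ends e.
  rewrite !(cutvecE _ hpq he).
  move: (key p) (key q); rewrite /Y /U !in_sd.
  by case: (p \in X); case: (q \in X); case: (p \in S); case: (q \in S);
     case: (p \in T); case: (q \in T); case: ((r \in X) != (r \in S));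
     case: ((r \in S) != (r \in T)).
- by [].
- by [].
- rewrite /dotp; apply: eq_bigr => e _; rewrite /c /dt.
  by case: (cutvec01 U e) => ->; case: (cutvec01 S e) => ->; rewrite ?eqxx ?z1; lra.
- rewrite /dotp; apply: eq_bigr => e _; rewrite /c /dt (cv_sd S T e) -/U.
  by case: (cutvec01 U e) => ->; case: (cutvec01 S e) => ->; rewrite ?eqxx ?z1; lra.
Qed.

End Graph.

Section Main.
Variables (k : nat) (n : 'I_k -> nat) (R : realType).
Local Notation V := (mpvert n).
Local Notation adj := (multipartite k n).
Local Notation E := (edge adj).
Local Notation cv S := (@cutvec V adj R S).

Lemma vertex_is_cut p : is_vertex (CUT adj R) p -> exists S, p = cv S.
Proof.
move=> [c [d [hb hiff]]].
have [Pp cp] := proj1 (hiff p) erefl.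
have hb' : forall X, dotp c (cv X) <= d.
  by move=> X; apply: hb; exact: (conv_delta (fun S => cv S) X).
have [w [w0 [w1 [wx wt]]]] := conv_tight hb' Pp cp.
case: (boolP [exists X, w X != 0]) => [/existsP [X hX]|/existsPn hw].
  exists X; apply/esym/(proj2 (hiff _)); split.
    exact: (conv_delta (fun S => cv S) X).
  exact: wt.
exfalso; move: w1; rewrite big1 => [|X _]; last by apply/eqP; move: (hw X); rewrite negbK.
by move/eqP; rewrite eq_sym oner_eq0.
Qed.

Lemma within_comp (P : (E -> R) -> Prop) u w v :
  skel_within P 1 u w -> skel_within P 1 w v -> skel_within P 2 u v.
Proof.
move=> h1 [<-|[w' [hw ha]]]; first by left.
by right; exists w; split => //; rewrite hw.
Qed.

Lemma sd_SSA (S A : {set V}) : sd S (sd S A) = A.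
Proof. by apply/setP => r; rewrite !in_sd; case: (r \in S); case: (r \in A). Qed.

Lemma sd_SAT (S A T : {set V}) : sd (sd S A) T = sd A (sd S T).
Proof.
by apply/setP => r; rewrite !in_sd; case: (r \in S); case: (r \in A); case: (r \in T).
Qed.

Lemma sd_C (A X : {set V}) : sd A (~: X) = ~: sd A X.
Proof. by apply/setP => r; rewrite in_setC !in_sd in_setC; case: (r \in A); case: (r \in X). Qed.

Hypothesis hk : (2 <= k)%N.
Hypothesis hn : forall i, (2 <= n i)%N.

Lemma other_part (i : 'I_k) : exists j : 'I_k, j != i.
Proof.
have hk0 : (0 < k)%N by apply: leq_trans hk.
case: (eqVneq (val i) 0%N) => h.
  exists (Ordinal hk); apply/eqP => /(congr1 val) /=; by rewrite h.
exists (Ordinal hk0); apply/eqP => /(congr1 val) /= h0; apply/(negP h)/eqP/esym; exact: h0.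
Qed.

Definition vx (j : 'I_k) (m : nat) (h : (m < n j)%N) : V :=
  Tagged (fun i => 'I_(n i)) (Ordinal h).

Lemma hn0 j : (0 < n j)%N. Proof. exact: leq_trans (hn j). Qed.

Lemma vx_neq j : vx (hn0 j) != vx (hn j).
Proof. by apply/eqP => /(congr1 (fun z : V => nat_of_ord (tagged z))). Qed.

Lemma choose_A (U : {set V}) : ~ (good U /\ good (~: U)) ->
  exists A, [/\ good A, good (~: A), good (sd A U) & good (~: sd A U)].
Proof.
move=> hng.
have [X [hX hUX]] : exists X, ~ good X /\ (U = X \/ U = ~: X).
  case: (classic (good U)) => gU.
    exists (~: U); split; last by right; rewrite setCK.
    by move=> g; apply: hng.
  by exists U; split => //; left.
have h1 : (1 < #|X|)%N.
  by rewrite ltnNge; apply/negP => h; apply: hX; right.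
have [x [x' [hx hx' hxx']]] := card_gt1P h1.
have tX : forall r, r \in X -> tag r = tag x.
  move=> r hr; apply/eqP/negPn/negP => h; apply: hX; left; by exists r, x.
have nX : forall r, tag r != tag x -> (r \in X) = false.
  move=> r hr; apply/negP => /tX h; by rewrite h eqxx in hr.
have [j hj] := other_part (tag x).
pose y := vx (hn0 j); pose y' := vx (hn j).
have ty : tag y = j by []. have ty' : tag y' = j by [].
have hyX : (y \in X) = false by apply: nX; rewrite ty.
have hy'X : (y' \in X) = false by apply: nX; rewrite ty'.
have tx' : tag x' = tag x by apply: tX.
pose A := [set x; y].
have hxA : x \in A by rewrite !inE eqxx.
have hyA : y \in A by rewrite !inE eqxx orbT.
have hx'A : (x' \in A) = false.
  rewrite !inE eq_sym (negbTE hxx') /=; apply/negbTE/tag_neq.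
  by rewrite tx' ty eq_sym.
have hy'A : (y' \in A) = false.
  rewrite !inE; apply/negbTE; rewrite negb_or; apply/andP; split.
    by apply/tag_neq; rewrite ty'.
  by rewrite eq_sym; apply: vx_neq.
have g1 : good (sd A X).
  left; exists x', y; rewrite !in_sd hx'A hx' hyA hyX; do 2 split => //.
  by rewrite tx' ty eq_sym.
have g2 : good (~: sd A X).
  left; exists x, y'; rewrite !in_setC !in_sd hxA hx hy'A hy'X; do 2 split => //.
  by rewrite ty' eq_sym.
exists A; split.
- left; exists x, y; do 2 split => //; by rewrite ty eq_sym.
- left; exists x', y'; rewrite !in_setC hx'A hy'A; do 2 split => //; by rewrite tx' ty' eq_sym.
- by case: hUX => ->; rewrite ?sd_C.
- by case: hUX => ->; rewrite ?sd_C ?setCK.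
Qed.

Lemma upper u v : is_vertex (CUT adj R) u -> is_vertex (CUT adj R) v ->
  skel_within (CUT adj R) 2 u v.
Proof.
move=> /vertex_is_cut [S ->] /vertex_is_cut [T ->].
case: (classic (good (sd S T) /\ good (~: sd S T))) => [[g1 g2]|hng].
  by left; apply: adj_step.
have [A [gA gA' gB gB']] := choose_A hng.
apply: (@within_comp _ _ (cv (sd S A))).
  by apply: adj_step; rewrite sd_SSA.
by apply: adj_step; rewrite sd_SAT.
Qed.


Lemma seg0 (u v : E -> R) : segment u v u.
Proof. exists 0; split; first by rewrite lexx ler01. by move=> e; rewrite subr0 mul1r mul0r addr0. Qed.

Lemma seg1 (u v : E -> R) : segment u v v.
Proof. exists 1; split; first by rewrite ler01 lexx. by move=> e; rewrite subrr mul0r mul1r add0r. Qed.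

Lemma lower : exists u v, is_vertex (CUT adj R) u /\ is_vertex (CUT adj R) v /\
  forall m, (m < 2)%N -> ~ skel_within (CUT adj R) m u v.
Proof.
have hk0 : (0 < k)%N by apply: leq_trans hk.
pose i0 : 'I_k := Ordinal hk0. pose i1 : 'I_k := Ordinal hk.
have h01 : i0 != i1 by apply/eqP => /(congr1 val).
pose a := vx (hn0 i0). pose b := vx (hn i0). pose y := vx (hn0 i1).
pose V0 := [set r : V | tag r == i0].
have hay : tag a != tag y by [].
have hby : tag b != tag y by [].
pose e1 := mkedge hay. pose e2 := mkedge hby.
have ha0 : a \in V0 by rewrite inE.
have hb0 : b \in V0 by rewrite inE.
have hy0 : (y \in V0) = false by rewrite inE eq_sym (negbTE h01).
have hab : (b == a) = false by apply/negbTE; rewrite eq_sym; apply: vx_neq.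
have hya : (y == a) = false by apply/negbTE; rewrite eq_sym; apply: tag_neq.
exists (cv set0), (cv V0); split; first exact: cut_vertex.
split; first exact: cut_vertex.
have v1 : cv V0 e1 = 1 by rewrite cutvec_mk ha0 hy0.
have u1 : cv set0 e1 = 0 by rewrite cutvec_mk !inE.
have hne : cv set0 <> cv V0.
  by move=> h; move: u1; rewrite h v1 => /eqP; rewrite oner_eq0.
case=> [|[|m]] // _.
move=> [huv|[w [<- [_ [_ [_ [c [d [hb hiff]]]]]]]]]; first exact: hne huv.
have cu := proj2 (proj1 (hiff _) (seg0 (cv set0) (cv V0))).
have cv' := proj2 (proj1 (hiff _) (seg1 (cv set0) (cv V0))).
pose B := V0 :\ a.
have hsum : forall e, cv set0 e + cv V0 e = cv [set a] e + cv B e.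
  move=> e; have [p [q [hpq ht he]]] := edge_ends e.
  rewrite !(cutvecE R _ hpq he) !inE.
  case hp: (tag p == i0); case hq: (tag q == i0).
  - by move: ht; rewrite (eqP hp) (eqP hq) eqxx.
  - have qa : (q == a) = false.
      by apply/negbTE/negP => /eqP hqa; rewrite hqa eqxx in hq.
    by rewrite qa; case: (p == a) => /=; lra.
  - have pa : (p == a) = false.
      by apply/negbTE/negP => /eqP hpa; rewrite hpa eqxx in hp.
    by rewrite pa; case: (q == a) => /=; lra.
  - have qa : (q == a) = false.
      by apply/negbTE/negP => /eqP hqa; rewrite hqa eqxx in hq.
    have pa : (p == a) = false.
      by apply/negbTE/negP => /eqP hpa; rewrite hpa eqxx in hp.
    by rewrite pa qa /=; lra.
have hd : dotp c (cv [set a]) + dotp c (cv B) = dotp c (cv set0) + dotp c (cv V0).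
  rewrite /dotp -!big_split /=; apply: eq_bigr => e _; by rewrite -!mulrDr hsum.
have hb1 := hb _ (conv_delta (fun S => cv S) [set a]).
have hb2 := hb _ (conv_delta (fun S => cv S) B).
have ca : dotp c (cv [set a]) = d.
  rewrite cu cv' in hd; simpl in hb1, hb2; lra.
have [t [_ ht]] := proj2 (hiff _) (conj (conv_delta (fun S => cv S) [set a]) ca).
have t1 := ht e1. have t2 := ht e2.
move: t1 t2; rewrite /e1 /e2 !cutvec_mk !inE eqxx hya hab /= => h1 h2; lra.
Qed.

End Main.

Theorem theorem11' (R : realType) (k : nat) (n : 'I_k -> nat) :
  (2 <= k)%N -> (forall i, (2 <= n i)%N) ->
  skeleton_diameter (CUT (multipartite k n) R) 2.
Proof.
move=> hk hn; split; first exact: upper.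
exact: lower.
Qed.

Theorem theorem11 (R : realType) (k : nat) (n : 'I_k -> nat) :
  (2 <= k)%N -> (forall i, (2 <= n i)%N) ->
  skeleton_diameter (CUT (multipartite k n) R) 2.
Proof. exact: theorem11'. Qed.
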